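(* Let $q$ be a power of $2$, $s\ge2$, and $n\ge s$ integers with $d_{\max\text{-}iso}(q;[n,s])\ge1$; let $\pi:\mathbb{F}_{q^s}\to\mathbb{F}_q^n$ be an isometry whose image $\pi(\mathbb{F}_{q^s})$ is an $[n,s,d]_q$ code with $d=d_{\max\text{-}iso}(q;[n,s])$. Let $a,b\in\mathbb{F}_{q^s}$ with $b\neq0$ and let $N\ge2$. Let $r\ge0$ be such that $2^r$ divides $N+1$ but $2^{r+1}$ does not, let $N+1=2^r(m+1)$, and let $\theta\in\overline{\mathbb{F}}_q$ be a primitive $(m+1)$-th root of unity. Assume: if $r=0$, then $a/b\notin\{1/b+\theta^i+\theta^{-i}:1\le i\le m/2\}$; if $r\ge1$ and $m=0$, then $a\ne1$; if $r\ge1$ and $m\ge1$, then $a/b\notin\{1/b\}\cup\{1/b+\theta^i+\theta^{-i}:1\le i\le m/2\}$. Then $\pi^{\otimes 2N}(\hat C_N(a,b))$ is an LCD code over $\mathbb{F}_q$ with parameters $[2nN,sN,D^*]_q$, where $D^*\ge dD$ and $D$ is the minimum distance of $\hat C_N(a,b)$.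
   Context: For a field $K$, $a,b\in K$ and $N\ge 2$, $\hat T_N(a,b)$ is the $N\times N$ symmetric tridiagonal Toeplitz matrix with diagonal entries $a$, first super- and sub-diagonal entries $b$, other entries $0$; $\hat C_N(a,b)$ is the $[2N,N]$ linear code over $K$ (here $K=\mathbb{F}_{q^s}$) with generator matrix $[I_N\mid\hat T_N(a,b)]$. A linear code $C$ is LCD if $C\cap C^\perp=\{0\}$ (Euclidean dual). An $\mathbb{F}_q$-linear map $\pi:\mathbb{F}_{q^s}\to\mathbb{F}_q^n$ ($n\ge s\ge2$) is an isometry if there is an $\mathbb{F}_q$-basis $(e_1,\dots,e_s)$ of $\mathbb{F}_{q^s}$ with trace-dual basis $(e'_1,\dots,e'_s)$ such that $\pi(e_i)\cdot\pi(e'_j)=\delta_{ij}$ for all $i,j$ (standard inner product on $\mathbb{F}_q^n$). $d_{\max\text{-}iso}(q;[n,s])$ is the largest $d$ such that some isometry $\pi:\mathbb{F}_{q^s}\to\mathbb{F}_q^n$ has image $\pi(\mathbb{F}_{q^s})$ (an $[n,s]_q$ code) of minimum distance $d$. The map $\pi^{\otimes 2N}:\mathbb{F}_{q^s}^{2N}\to\mathbb{F}_q^{2Nn}$ is $(c_1,\dots,c_{2N})\mapsto(\pi(c_1),\dots,\pi(c_{2N}))$. *)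

(* Defs.v *)
From HB Require Import structures.
From mathcomp Require Import all_boot all_order all_algebra all_field.
Set Implicit Arguments. Unset Strict Implicit. Unset Printing Implicit Defensive.
Import GRing.Theory.
Local Open Scope ring_scope.

Definition wt (R : zmodType) (m : nat) (v : 'rV[R]_m) : nat :=
  #|[set i : 'I_m | v 0 i != 0]|.

Definition is_min_dist (R : zmodType) (m : nat) (C : 'rV[R]_m -> Prop) (d : nat) : Prop :=
  (exists c, [/\ C c, c != 0 & wt c = d]) /\
  (forall c, C c -> c != 0 -> (d <= wt c)%N).

Definition dotF (F : fieldType) (m : nat) (u v : 'rV[F]_m) : F :=
  \sum_(i < m) u 0 i * v 0 i.

(* Absolute trace Tr_{K/F}(x) = sum_{i < [K:F]} x^(q^i), q = |F|
   (the value lies in the copy of F inside K). *)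
Definition trK (F : finFieldType) (K : fieldExtType F) (x : K) : K :=
  \sum_(i < \dim {:K}) x ^+ (#|F| ^ i).

Definition is_isometry (F : finFieldType) (K : fieldExtType F) (n : nat)
    (pi : K -> 'rV[F]_n) : Prop :=
  exists e e' : (\dim {:K}).-tuple K,
    [/\ basis_of fullv e,
        (forall i j : 'I_(\dim {:K}), trK (tnth e i * tnth e' j) = (i == j)%:R)
      & (forall i j : 'I_(\dim {:K}),
           dotF (pi (tnth e i)) (pi (tnth e' j)) = (i == j)%:R)].

Definition image_code (F : finFieldType) (K : fieldExtType F) (n : nat)
    (pi : K -> 'rV[F]_n) : 'rV[F]_n -> Prop :=
  fun v => exists x, v = pi x.

Definition hatT (K : fieldType) (N : nat) (a b : K) : 'M[K]_N :=
  \matrix_(i < N, j < N)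
     if i == j then a else if ((i.+1 == j) || (j.+1 == i))%N then b else 0.

Arguments hatT {K} N a b.

Definition hatC (K : fieldType) (N : nat) (a b : K) : 'rV[K]_(N + N) -> Prop :=
  fun c => exists u : 'rV[K]_N, c = u *m row_mx 1%:M (hatT N a b).

Definition piT (F : finFieldType) (K : fieldExtType F) (n M : nat)
    (pi : K -> 'rV[F]_n) (c : 'rV[K]_M) : 'rV[F]_(M * n) :=
  mxvec (\matrix_(i < M, k < n) pi (c 0 i) 0 k).

Definition map_code (R S : Type) (f : R -> S) (C : R -> Prop) : S -> Prop :=
  fun v => exists c, C c /\ v = f c.

Definition is_LCD (F : fieldType) (m : nat) (C : 'rV[F]_m -> Prop) : Prop :=
  forall v, C v -> (forall w, C w -> dotF v w = 0) -> v = 0.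
Arguments hatC {K} N a b.

(* Main.v *)
Require Import Defs.
From HB Require Import structures.
From mathcomp Require Import all_boot all_order all_algebra all_field.
From mathcomp Require Import zify ring.
From Stdlib Require Import Classical_Prop.
Import GRing.Theory.
Local Open Scope ring_scope.

Set Implicit Arguments. Unset Strict Implicit.


Fixpoint Us {R : pzRingType} (x : R) (k : nat) : R :=
  match k with
  | 0 => 0
  | k1.+1 => match k1 with 0 => 1 | k2.+1 => x * Us x k1 + Us x k2 end
  end.

Lemma UsSS (R : pzRingType) (x : R) k : Us x k.+2 = x * Us x k.+1 + Us x k.
Proof. by []. Qed.

Lemma Us_add (R : comPzRingType) (x : R) m n :
  Us x (m + n).+1 = Us x m.+1 * Us x n.+1 + Us x m * Us x n.
Proof.
elim/ltn_ind: n => -[|[|n]] IH.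
- by rewrite addn0 /= mulr1 mulr0 addr0.
- rewrite addn1 UsSS /=; ring.
- have e1 := IH n.+1 (ltnSn _); have e2 := IH n (ltnW (ltnSn _)).
  rewrite addnS in e1; rewrite !addnS UsSS e1 e2 !UsSS; ring.
Qed.

Lemma Us_odd (R : comPzRingType) (x : R) k : 2%:R = 0 :> R ->
  Us x (k + k).+1 = (Us x k.+1 + Us x k) ^+ 2.
Proof.
move=> h2; rewrite Us_add.
transitivity (Us x k.+1 ^+ 2 + Us x k ^+ 2 + (Us x k.+1 * Us x k) * 2%:R).
  by rewrite h2; ring.
ring.
Qed.

Lemma Us_even (R : comPzRingType) (x : R) k : 2%:R = 0 :> R ->
  Us x (k + k) = x * Us x k ^+ 2.
Proof.
move=> h2; case: k => [|k]; first by rewrite /= expr0n mulr0.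
rewrite addSn Us_add UsSS.
transitivity (x * Us x k.+1 ^+ 2 + (Us x k.+1 * Us x k) * 2%:R).
  by ring.
by rewrite h2 mulr0 addr0.
Qed.

Lemma Us_pow2 (R : idomainType) (x : R) r M : 2%:R = 0 :> R ->
  Us x (2 ^ r * M) = 0 -> (x = 0 /\ (0 < r)%N) \/ Us x M = 0.
Proof.
move=> h2; elim: r => [|r IH]; first by rewrite mul1n; right.
rewrite expnS -mulnA mul2n -addnn Us_even // => /eqP; rewrite mulf_eq0.
case/orP => [/eqP ->|]; first by left.
rewrite expf_eq0 /= => /eqP /IH [[? ?]|]; [left|right] => //.
Qed.

Lemma rmorph_Us (R S : nzRingType) (f : {rmorphism R -> S}) x k :
  f (Us x k) = Us (f x) k.
Proof.
elim/ltn_ind: k => -[|[|k]] IH; rewrite ?rmorph0 ?rmorph1 //.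
by rewrite !UsSS rmorphD rmorphM !IH.
Qed.

Lemma horner_Us (R : comNzRingType) (x : R) k : (Us 'X k).[x] = Us x k.
Proof.
elim/ltn_ind: k => -[|[|k]] IH; rewrite ?horner0 ?hornerC //.
by rewrite !UsSS hornerD hornerM hornerX !IH.
Qed.

Lemma size_Us (R : nzRingType) k : size (Us ('X : {poly R}) k) = k.
Proof.
elim/ltn_ind: k => -[|[|k]] IH; rewrite ?size_poly0 ?size_poly1 //.
have nz : Us ('X : {poly R}) k.+1 != 0 by rewrite -size_poly_eq0 IH.
rewrite UsSS -commr_polyX size_polyDl; last first.
  by rewrite size_mulX ?IH.
by rewrite size_mulX ?IH.
Qed.

Lemma char2_dbl (R : pzRingType) (b : R) : 2%:R = 0 :> R -> b + b = 0.
Proof. by move=> h2; rewrite -mulr2n -mulr_natl h2 mul0r. Qed.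

Lemma char2_opp (R : pzRingType) (b : R) : 2%:R = 0 :> R -> - b = b.
Proof. by move=> h2; apply/esym/eqP; rewrite -addr_eq0 char2_dbl. Qed.

Lemma char2_eq (R : pzRingType) (a b : R) : 2%:R = 0 :> R -> a + b = 0 -> a = b.
Proof. by move=> h2 /eqP; rewrite addr_eq0 char2_opp // => /eqP. Qed.

Lemma Us_yz (R : comPzRingType) (y z : R) j : 2%:R = 0 :> R -> y * z = 1 ->
  (y + z) * Us (y + z) j = y ^+ j + z ^+ j.
Proof.
move=> h2 yz; elim/ltn_ind: j => -[|[|j]] IH.
- by rewrite mulr0 !expr0 char2_dbl.
- by rewrite mulr1 !expr1.
transitivity ((y + z) * ((y + z) * Us (y + z) j.+1) + (y + z) * Us (y + z) j).
  by rewrite UsSS; ring.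
rewrite !IH //.
have e1 : y * z ^+ j.+1 = z ^+ j by rewrite exprS mulrA yz mul1r.
have e2 : z * y ^+ j.+1 = y ^+ j by rewrite exprS mulrA (mulrC z) yz mul1r.
transitivity (y ^+ j.+2 + z ^+ j.+2 + (y * z ^+ j.+1 + z * y ^+ j.+1)
   + (y ^+ j + z ^+ j)); first by rewrite !exprS; ring.
rewrite e1 e2.
transitivity (y ^+ j.+2 + z ^+ j.+2 + (y ^+ j + z ^+ j) * 2%:R); first by ring.
by rewrite h2 mulr0 addr0.
Qed.

Section Roots.
Variables (L : fieldType) (theta : L) (k : nat).
Hypothesis h2 : 2%:R = 0 :> L.
Hypothesis prim : ((k + k).+1).-primitive_root theta.

Let n := (k + k).+1.

Lemma theta_neq0 : theta != 0.
Proof.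
apply/eqP => t0; have := prim_expr_order prim; rewrite t0 expr0n /=.
by move/eqP; rewrite eq_sym oner_eq0.
Qed.

Lemma Wc_root i : (1 <= i <= k)%N ->
  Us (theta ^+ i + theta ^- i) k.+1 + Us (theta ^+ i + theta ^- i) k = 0.
Proof.
case/andP=> i1 ik.
set y := theta ^+ i; set z := theta ^- i.
have y0 : y != 0 by rewrite expf_neq0 // theta_neq0.
have yz : y * z = 1 by rewrite /z divff.
have yn : y ^+ (k + k).+1 = 1.
  by rewrite /y -exprM mulnC exprM (prim_expr_order prim) expr1n.
have yz0 : y + z != 0.
  apply/eqP => /(char2_eq h2) zy.
  have : y ^+ 2 = 1 by rewrite expr2 {2}zy yz.
  rewrite /y -exprM => /eqP; rewrite -(prim_order_dvd prim) => /dvdn_leq.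
  rewrite /n; lia.
suff : (y + z) * (Us (y + z) k.+1 + Us (y + z) k) = 0.
  by move/eqP; rewrite mulf_eq0 (negbTE yz0) => /eqP.
rewrite mulrDr !Us_yz //.
have H : y ^+ k.+1 * y ^+ k = 1 by rewrite -exprD addSn yn.
have yk0 : y ^+ k != 0 by rewrite expf_neq0.
have yk10 : y ^+ k.+1 != 0 by rewrite expf_neq0.
have E1 : z ^+ k = y ^+ k.+1.
  rewrite /z -/y exprVn.
  by rewrite -[RHS]mulr1 -(divff yk0) mulrA H mul1r.
have E2 : z ^+ k.+1 = y ^+ k.
  rewrite /z -/y exprVn.
  by rewrite -[RHS]mulr1 -(divff yk10) mulrA (mulrC (y ^+ k)) H mul1r.
rewrite E1 E2.
suff -> : y ^+ k.+1 + y ^+ k + (y ^+ k + y ^+ k.+1) = (y ^+ k.+1 + y ^+ k) * 2%:R.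
  by rewrite h2 mulr0.
ring.
Qed.

Lemma c_inj i j : (1 <= i <= k)%N -> (1 <= j <= k)%N ->
  theta ^+ i + theta ^- i = theta ^+ j + theta ^- j -> i = j.
Proof.
move=> /andP[i1 ik] /andP[j1 jk] e.
set yi := theta ^+ i in e; set zi := theta ^- i in e.
set yj := theta ^+ j in e; set zj := theta ^- j in e.
have yi0 : yi != 0 by rewrite expf_neq0 // theta_neq0.
have yj0 : yj != 0 by rewrite expf_neq0 // theta_neq0.
have yzi : yi * zi = 1 by rewrite /zi divff.
have yzj : yj * zj = 1 by rewrite /zj divff.
have E : (yi + yj) * (1 + zi * zj) = 0.
  transitivity (yi + yj * (yj * zj) * zi + yj + yi * (yi * zi) * zj - yi * (yi * zi) * zj - yj * (yj * zj) * zi +  (yi * zi) * zj + (yj * zj) * zi).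
    by ring.
  rewrite yzi yzj !mulr1 !mul1r.
  transitivity ((yi + zi) + (yj + zj)); first by ring.
  by rewrite e char2_dbl.
move/eqP: E; rewrite mulf_eq0 => /orP[] /eqP /(char2_eq h2).
  move/eqP; rewrite /yi /yj (eq_prim_root_expr prim) !modn_small; first by move/eqP.
  - rewrite /n; lia.
  - rewrite /n; lia.
move=> e1.
have : yi * yj = 1.
  by rewrite -[LHS]mulr1 e1 mulrA -(mulrA yi) (mulrC yj) mulrA yzi mul1r yzj.
rewrite /yi /yj -exprD => /eqP; rewrite -(prim_order_dvd prim) => /dvdn_leq.
rewrite /n; lia.
Qed.

Lemma W_roots x : Us x k.+1 + Us x k = 0 ->
  exists2 i, (1 <= i <= k)%N & x = theta ^+ i + theta ^- i.
Proof.
move=> Wx.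
pose c i := theta ^+ i + theta ^- i.
case: (boolP [exists i : 'I_k.+1, (0 < i)%N && (x == c i)]).
  case/existsP=> i /andP[i0 /eqP ->]; exists i => //; rewrite i0 /= -ltnS ltn_ord //.
rewrite negb_exists => /forallP nx.
pose W : {poly L} := Us 'X k.+1 + Us 'X k.
have szW : size W = k.+1 by rewrite size_polyDl !size_Us.
have W0 : W != 0 by rewrite -size_poly_eq0 szW.
have hW t : root W t = (Us t k.+1 + Us t k == 0).
  by rewrite /root /W hornerD !horner_Us.
exfalso; suff: (k.+1 < k.+1)%N by rewrite ltnn.
have := max_poly_roots (rs := x :: map c (iota 1 k)) W0.
rewrite szW /= size_map size_iota; apply.
  rewrite hW Wx eqxx /=.
  apply/allP => y /mapP[i]; rewrite mem_iota => ir ->.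
  rewrite hW /c Wc_root ?eqxx //; lia.
apply/andP; split.
  apply/mapP => -[i]; rewrite mem_iota => /andP[i1 ik] xe.
  have := nx (Ordinal (n := k.+1) (m := i) ltac:(lia)).
  by rewrite /= i1 xe eqxx.
rewrite map_inj_in_uniq ?iota_uniq // => i j.
rewrite !mem_iota => hi hj; apply: c_inj; lia.
Qed.

End Roots.


Lemma sum_pick (R : nmodType) N (f : nat -> R) (k : nat) :
  \sum_(i < N) (if (i : nat) == k then f i else 0) = if (k < N)%N then f k else 0.
Proof.
elim: N => [|N IH]; first by rewrite big_ord0.
rewrite big_ord_recr /= IH.
case: (ssrnat.ltngtP k N) => h.
- by rewrite (_ : (k < N.+1)%N = true) ?addr0 //; lia.
- by rewrite (_ : (k < N.+1)%N = false) ?addr0 //; lia.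
- by rewrite h add0r ltnSn.
Qed.

Section Kernel.
Variables (K : fieldType) (N : nat) (a b : K).
Hypothesis h2 : 2%:R = 0 :> K.
Hypothesis hb : b != 0.

Lemma hatT_kernel (v : 'rV[K]_N) :
  Us ((a + 1) / b) N.+1 != 0 -> v *m (1%:M + hatT N a b) = 0 -> v = 0.
Proof.
move=> hU hv.
pose g (k : nat) : K := if k is k'.+1 then
   (if @insub _ (fun t => (t < N)%N) 'I_N k' is Some i then v 0 i else 0) else 0.
have gv (i : 'I_N) : g i.+1 = v 0 i by rewrite /g valK.
have gN k : (N <= k)%N -> g k.+1 = 0 by move=> h; rewrite /g insubN // -leqNgt.
have eqj (j : 'I_N) : g j.+1 * (1 + a) + g j.+2 * b + g j * b = 0.
  have := congr1 (fun M : 'M[K]_(1, N) => M 0 j) hv; rewrite !mxE => <-.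
  transitivity (\sum_(i < N) ((if (i : nat) == j then g i.+1 * (1 + a) else 0)
     + (if (i : nat) == j.+1 then g i.+1 * b else 0)
     + (if (j : nat) == 0%N then 0 else if (i : nat) == j.-1 then g i.+1 * b else 0))).
    rewrite !big_split /= (@sum_pick _ _ (fun i => g i.+1 * (1 + a)))
      (@sum_pick _ _ (fun i => g i.+1 * b)) ltn_ord.
    congr (_ + _ + _).
      by case: ltnP => h //; rewrite insubN ?mul0r // -leqNgt.
    case: eqP => [->|h]; first by rewrite big1 // mul0r.
    rewrite (@sum_pick _ _ (fun i => g i.+1 * b)).
    have jN := ltn_ord j.
    rewrite (_ : (j.-1 < N)%N = true); last by lia.
    by rewrite prednK //; lia.
  apply: eq_bigr => i _; rewrite !mxE gv.
  have -> : (i == j) = ((i : nat) == j) by [].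
  have jN := ltn_ord j.
  case: (eqVneq (i : nat) j) => [e|ne].
    case: ifP => [/eqP ?|_]; first lia.
    rewrite addr0 mulrDr mulr1.
    case: ifP => [_|/eqP j0]; first by rewrite addr0.
    case: ifP => [/eqP ?|_]; first lia.
    by rewrite addr0.
  rewrite add0r mulr0n add0r.
  case: (eqVneq (i : nat) j.+1) => [e|ne2].
    rewrite orbT; case: ifP => [_|_]; first by rewrite addr0.
    case: ifP => [/eqP ?|_]; [lia | by rewrite addr0].
  rewrite add0r orbF.
  case: (eqVneq (i.+1) j) => [e|ne3].
    case: ifP => [/eqP ?|_]; first lia.
    case: ifP => [_|/eqP ?]; [by [] | lia].
  rewrite mulr0.
  case: ifP => // _; case: ifP => // /eqP ?; lia.
set x := (a + 1) / b.
have rec (j : nat) : (j < N)%N -> g j.+2 = x * g j.+1 + g j.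
  move=> jN; have E : g j.+1 * (1 + a) + g j.+2 * b + g j * b = 0 := eqj (Ordinal jN).
  have E' : g j.+2 * b + (g j.+1 * (1 + a) + g j * b) = 0 by rewrite -E; ring.
  apply: (mulIf hb); rewrite (char2_eq h2 E') /x.
  by field.
have gU k : (k <= N.+1)%N -> g k = g 1 * Us x k.
  elim/ltn_ind: k => -[|[|k]] IH hk.
  - by rewrite mulr0.
  - by rewrite mulr1.
  rewrite rec; last by lia.
  rewrite UsSS (IH k.+1) ?(IH k) //; try lia.
  ring.
have g1 : g 1 = 0.
  have := gU N.+1 (leqnn _); rewrite gN // => /esym /eqP.
  by rewrite mulf_eq0 (negbTE hU) orbF => /eqP.
apply/rowP => i; rewrite mxE -gv gU ?g1 ?mul0r //.
by have := ltn_ord i; lia.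
Qed.

End Kernel.


Lemma U_nonzero (K : fieldType) (a b : K) (N r m : nat)
  (L : fieldType) (iota : {rmorphism K -> L}) (theta : L)
  (h2 : 2%:R = 0 :> K) (hb : b != 0)
  (hr2 : ~~ (2 ^ r.+1 %| N.+1)%N) (hm : N.+1 = (2 ^ r * m.+1)%N)
  (htheta : (m.+1).-primitive_root theta)
  (hcond0 : r = 0%N -> forall i : nat, (1 <= i <= m./2)%N ->
      iota (a / b) != iota (1 / b) + theta ^+ i + theta ^- i)
  (hcond1 : (1 <= r)%N -> m = 0%N -> a != 1)
  (hcond2 : (1 <= r)%N -> (1 <= m)%N ->
      iota (a / b) != iota (1 / b) /\
      (forall i : nat, (1 <= i <= m./2)%N ->
         iota (a / b) != iota (1 / b) + theta ^+ i + theta ^- i)) :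
  Us ((a + 1) / b) N.+1 != 0.
Proof.
have h2L : 2%:R = 0 :> L by rewrite -(rmorph_nat iota) h2 rmorph0.
have modd : ~~ odd m.
  apply/negP => om; move: hr2; rewrite hm expnS mulnC dvdn_pmul2l ?expn_gt0 //.
  by rewrite dvdn2 /= om.
set k := m./2.
have mk : m = (k + k)%N by rewrite addnn -{1}(odd_double_half m) (negbTE modd).
apply/eqP; rewrite hm => /(Us_pow2 h2) [[x0 r1]|].
  have a1 : a = 1.
    apply: (char2_eq h2); move/eqP: x0; rewrite mulf_eq0 invr_eq0 (negbTE hb) orbF.
    by move/eqP.
  case: (posnP m) => m0.
    by move: (hcond1 r1 m0); rewrite a1 eqxx.
  by case: (hcond2 r1 m0) => /negP; rewrite a1 eqxx.
rewrite mk Us_odd // => /eqP; rewrite expf_eq0 /= => /eqP W0.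
have W0L : Us (iota ((a + 1) / b)) k.+1 + Us (iota ((a + 1) / b)) k = 0.
  by rewrite -!rmorph_Us -rmorphD W0 rmorph0.
rewrite mk in htheta.
have [i ik e] := W_roots h2L htheta W0L.
have e' : iota (a / b) = iota (1 / b) + theta ^+ i + theta ^- i.
  by rewrite -addrA -e mulrDl rmorphD addrC -addrA (char2_dbl _ h2L) addr0.
case: (posnP r) => r0.
  by move/negP: (hcond0 r0 i ik); rewrite e'.
have m1 : (1 <= m)%N by move: ik; rewrite mk; lia.
by case: (hcond2 r0 m1) => _ /(_ i ik) /negP; rewrite e'.
Qed.


Lemma dotF_mx (F : fieldType) m (u v : 'rV[F]_m) : dotF u v = (u *m v^T) 0 0.
Proof. by rewrite /dotF !mxE; apply: eq_bigr => i _; rewrite !mxE. Qed.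

Lemma tr_hatT (K : fieldType) N (a b : K) : (hatT N a b)^T = hatT N a b.
Proof.
apply/matrixP => i j; rewrite !mxE eq_sym; congr (if _ then _ else _).
by rewrite orbC.
Qed.

Lemma hatC_LCD (K : fieldType) N (a b : K) (h2 : 2%:R = 0 :> K) (hb : b != 0)
  (hU : Us ((a + 1) / b) N.+1 != 0) (u : 'rV[K]_N) :
  (forall w : 'rV[K]_N, dotF (u *m row_mx 1%:M (hatT N a b))
                             (w *m row_mx 1%:M (hatT N a b)) = 0) -> u = 0.
Proof.
move=> H; set T := hatT N a b.
have H1 : u *m ((1%:M + T) *m (1%:M + T)) = 0.
  have -> : (1%:M + T) *m (1%:M + T) = row_mx 1%:M T *m (row_mx 1%:M T)^T.
    rewrite tr_row_mx tr_scalar_mx tr_hatT -/T mul_row_col mulmx1.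
    rewrite mulmxDl !mulmxDr !mul1mx mulmx1 -!addrA; congr (_ + _).
    rewrite addrA -mulr2n -scaler_nat h2 scale0r add0r //.
  apply/rowP => j; rewrite mxE.
  have := H (delta_mx 0 j); rewrite dotF_mx trmx_mul mulmxA -(mulmxA u).
  rewrite !mxE (bigD1 j) //= big1 => [|i ij]; rewrite !mxE ?eqxx ?mulr1 ?addr0 //.
  by rewrite (negbTE ij) mulr0.
apply: (hatT_kernel h2 hb hU); apply: (hatT_kernel h2 hb hU).
by rewrite -mulmxA.
Qed.


Lemma lin_agree (F : fieldType) (vT : vectType F) (V : lmodType F) n
  (X : n.-tuple vT) (f g : vT -> V) :
  basis_of fullv X ->
  (forall u v, f (u + v) = f u + f v) -> (forall c u, f (c *: u) = c *: f u) ->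
  (forall u v, g (u + v) = g u + g v) -> (forall c u, g (c *: u) = c *: g u) ->
  (forall i : 'I_n, f X`_i = g X`_i) -> forall x, f x = g x.
Proof.
move=> bX fD fZ gD gZ fg x.
have f0 : f 0 = 0 by rewrite -(scale0r 0) fZ scale0r.
have g0 : g 0 = 0 by rewrite -(scale0r 0) gZ scale0r.
rewrite (coord_basis bX (memvf x)) (big_morph f fD f0) (big_morph g gD g0).
by apply: eq_bigr => i _; rewrite fZ gZ fg.
Qed.

Lemma dotFDl (F : fieldType) m (u v w : 'rV[F]_m) :
  dotF (u + v) w = dotF u w + dotF v w.
Proof. by rewrite /dotF -big_split; apply: eq_bigr => i _; rewrite mxE mulrDl. Qed.

Lemma dotFZl (F : fieldType) m c (u w : 'rV[F]_m) : dotF (c *: u) w = c * dotF u w.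
Proof. by rewrite /dotF mulr_sumr; apply: eq_bigr => i _; rewrite mxE mulrA. Qed.

Lemma dotFC (F : fieldType) m (u w : 'rV[F]_m) : dotF u w = dotF w u.
Proof. by rewrite /dotF; apply: eq_bigr => i _; rewrite mulrC. Qed.

Section Trace.
Variables (F : finFieldType) (K : fieldExtType F).
Hypothesis char2 : 2%N \in [pchar F].

Lemma char2K : 2%N \in [pchar K].
Proof. by rewrite (pchar_lalg K). Qed.

Lemma frob2 (x y : K) e : (x + y) ^+ (2 ^ e) = x ^+ (2 ^ e) + y ^+ (2 ^ e).
Proof.
elim: e => [|e IH]; first by rewrite !expr1.
rewrite expnSr !exprM IH exprDn_pchar //.
by rewrite pnatE // char2K.
Qed.

Lemma cardF2 : exists t, #|F| = (2 ^ t)%N.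
Proof. by exists (logn 2 #|F|); have := card_pprimeChar char2. Qed.

Lemma trKD (x y : K) : trK (x + y) = trK x + trK y.
Proof.
rewrite /trK -big_split; apply: eq_bigr => i _.
have [t ->] := cardF2; by rewrite -expnM frob2.
Qed.

Lemma trK0 : trK (0 : K) = 0.
Proof.
rewrite /trK big1 // => i _; rewrite expr0n.
have [t ->] := cardF2; by rewrite -expnM expn_eq0.
Qed.

Lemma alg_frob (c : F) i : (c%:A : K) ^+ (#|F| ^ i) = c%:A.
Proof.
elim: i => [|i IH]; first by rewrite expr1.
by rewrite expnSr exprM IH -in_algE -rmorphXn expf_card.
Qed.

Lemma trKZ (c : F) (x : K) : trK (c *: x) = c *: trK x.
Proof.
rewrite /trK scaler_sumr; apply: eq_bigr => i _.
by rewrite -mulr_algl exprMn alg_frob mulr_algl.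
Qed.

Lemma trK_sum I (r : seq I) (P : pred I) (f : I -> K) :
  trK (\sum_(i <- r | P i) f i) = \sum_(i <- r | P i) trK (f i).
Proof. exact: (big_morph _ trKD trK0). Qed.

Variables (n : nat) (pi : {linear K -> 'rV[F]_n}).
Hypothesis hpi : is_isometry pi.

Lemma iso_tr (x y : K) : (dotF (pi x) (pi y))%:A = trK (x * y).
Proof.
case: hpi => e [e' [be hte hde]].
have te i : tnth e i = e`_i by rewrite (tnth_nth 0).
have te' i : tnth e' i = e'`_i by rewrite (tnth_nth 0).
have fe' : free e'.
  apply/freeP => k hk i.
  have : trK (e`_i * \sum_(j < \dim {:K}) k j *: e'`_j) = 0 by rewrite hk mulr0 trK0.
  rewrite mulr_sumr trK_sum (bigD1 i) //= big1 => [|j ji].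
    rewrite addr0 -scalerAr trKZ -te -te' hte eqxx => /eqP.
    by rewrite scaler_eq0 oner_eq0 orbF => /eqP.
  by rewrite -scalerAr trKZ -te -te' hte eq_sym (negbTE ji) scaler0.
have be' : basis_of fullv e'.
  by rewrite basisEfree fe' subvf size_tuple leqnn.
pose f1 (y : K) (x : K) := (dotF (pi x) (pi y))%:A : K.
pose g1 (y : K) (x : K) := trK (x * y).
have step1 (j : 'I_(\dim {:K})) x0 : f1 e'`_j x0 = g1 e'`_j x0.
  apply: (lin_agree be) => [u v|c u|u v|c u|i] {x0}.
  - by rewrite /f1 linearD dotFDl scalerDl.
  - by rewrite /f1 linearZ dotFZl scalerA.
  - by rewrite /g1 mulrDl trKD.
  - by rewrite /g1 -scalerAl trKZ.
  - by rewrite /f1 /g1 -te -te' hde hte -in_algE rmorph_nat.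
have := lin_agree be' (f := fun y => f1 y x) (g := fun y => g1 y x).
apply => [u v|c u|u v|c u|j].
- by rewrite /f1 linearD dotFC dotFDl scalerDl !(dotFC (pi x)).
- by rewrite /f1 linearZ dotFC dotFZl scalerA dotFC.
- by rewrite /g1 mulrDr trKD.
- by rewrite /g1 -scalerAr trKZ.
- exact: step1.
Qed.

Lemma tr_one : exists z : K, trK z != 0.
Proof.
case: hpi => e [e' [be hte hde]].
have : (0 < \dim {:K})%N by rewrite adim_gt0.
case: (\dim {:K}) e e' be hte hde => // d e e' be hte hde _.
by exists (tnth e ord0 * tnth e' ord0); rewrite hte eqxx oner_eq0.
Qed.

Lemma tr_nondeg (z : K) : (forall l, trK (l * z) = 0) -> z = 0.
Proof.
move=> H; apply/eqP; case: (eqVneq z 0) => // z0.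
have [w /eqP[]] := tr_one.
by rewrite -(divfK z0 w) H.
Qed.

Lemma pi_inj (x : K) : pi x = 0 -> x = 0.
Proof.
move=> px; apply: tr_nondeg => l.
by rewrite mulrC -iso_tr px /dotF big1 ?scale0r // => i _; rewrite mxE mul0r.
Qed.

End Trace.


Lemma sum_mxvec (V : nmodType) m n (f : 'I_(m * n) -> V) :
  \sum_t f t = \sum_(i < m) \sum_(j < n) f (mxvec_index i j).
Proof.
rewrite (reindex _ (curry_mxvec_bij _ _)) /= pair_bigA.
by apply: eq_bigr => -[i j].
Qed.

Lemma wtE (R : zmodType) m (v : 'rV[R]_m) : wt v = (\sum_t (v ord0 t != 0%R))%N.
Proof.
rewrite /wt cardsE -sum1_card big_mkcond /=.
apply: eq_bigr => t _; rewrite unfold_in /=; by case: (v ord0 t != 0%R).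
Qed.

Section PiT.
Variables (F : finFieldType) (K : fieldExtType F) (n : nat).
Variable pi : {linear K -> 'rV[F]_n}.

Lemma piTE M (c : 'rV[K]_M) i k : piT pi c 0 (mxvec_index i k) = pi (c 0 i) 0 k.
Proof. by rewrite /piT mxvecE mxE. Qed.

Lemma dotF_piT0 M (c c' : 'rV[K]_M) :
  dotF (piT pi c) (piT pi c') = \sum_i dotF (pi (c 0 i)) (pi (c' 0 i)).
Proof.
rewrite /dotF sum_mxvec; apply: eq_bigr => i _; apply: eq_bigr => k _.
by rewrite !piTE.
Qed.

Lemma wt_piT M (c : 'rV[K]_M) : wt (piT pi c) = (\sum_i wt (pi (c ord0 i)))%N.
Proof.
rewrite wtE sum_mxvec; apply: eq_bigr => i _; rewrite wtE.
by apply: eq_bigr => k _; rewrite piTE.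
Qed.

Lemma piT0 M : piT pi (0 : 'rV[K]_M) = 0.
Proof.
apply/rowP => t; case/mxvec_indexP: t => i k.
by rewrite piTE !mxE linear0 mxE.
Qed.

Lemma piT_lin M (k : F) (w w' : 'rV[K]_M) :
  piT pi (k%:A *: w + w') = k *: piT pi w + piT pi w'.
Proof.
apply/rowP => t; case/mxvec_indexP: t => i j.
by rewrite !mxE !piTE !mxE mulr_algl linearP !mxE.
Qed.

Hypothesis char2 : 2%N \in [pchar F].
Hypothesis hpi : is_isometry pi.

Lemma dotF_piT M (c c' : 'rV[K]_M) :
  (dotF (piT pi c) (piT pi c'))%:A = trK (dotF c c').
Proof.
rewrite dotF_piT0 [dotF c c']/dotF (trK_sum char2) scaler_suml; apply: eq_bigr => i _.
by rewrite (iso_tr char2 hpi).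
Qed.

Lemma piT_eq0 M (c : 'rV[K]_M) : piT pi c = 0 -> c = 0.
Proof.
move=> h; apply/rowP => i; rewrite mxE; apply: (pi_inj char2 hpi).
apply/rowP => k; rewrite mxE -piTE h mxE //.
Qed.

End PiT.


Lemma min_exists (P : nat -> Prop) : (exists n, P n) ->
  exists n, P n /\ forall m, P m -> (n <= m)%N.
Proof.
move=> [n Pn]; elim/ltn_ind: n Pn => n IH Pn.
case: (classic (exists m, P m /\ (m < n)%N)) => [[m [Pm mn]]|H].
  exact: IH mn Pm.
exists n; split => // m Pm; rewrite leqNgt; apply/negP => mn.
by apply: H; exists m.
Qed.

Unset Implicit Arguments. Set Strict Implicit.

Theorem theorem3p2
  (F : finFieldType) (K : fieldExtType F) (s n : nat)
  (char2 : 2%N \in [pchar F])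
  (hs : (2 <= s)%N) (hK : \dim {:K} = s) (hn : (s <= n)%N)
  (pi : {linear K -> 'rV[F]_n}) (d : nat)
  (hpi : is_isometry pi)
  (hd : is_min_dist (image_code pi) d)
  (hdmax : forall (pi' : {linear K -> 'rV[F]_n}) (d' : nat),
      is_isometry pi' -> is_min_dist (image_code pi') d' -> (d' <= d)%N)
  (hd1 : (1 <= d)%N)
  (a b : K) (hb : b != 0) (N : nat) (hN : (2 <= N)%N)
  (r m : nat)
  (hr1 : (2 ^ r %| N.+1)%N) (hr2 : ~~ (2 ^ r.+1 %| N.+1)%N)
  (hm : N.+1 = (2 ^ r * m.+1)%N)
  (L : fieldType) (iota : {rmorphism K -> L}) (theta : L)
  (htheta : (m.+1).-primitive_root theta)
  (hcond0 : r = 0%N -> forall i : nat, (1 <= i <= m./2)%N ->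
      iota (a / b) != iota (1 / b) + theta ^+ i + theta ^- i)
  (hcond1 : (1 <= r)%N -> m = 0%N -> a != 1)
  (hcond2 : (1 <= r)%N -> (1 <= m)%N ->
      iota (a / b) != iota (1 / b) /\
      (forall i : nat, (1 <= i <= m./2)%N ->
         iota (a / b) != iota (1 / b) + theta ^+ i + theta ^- i))
  (D : nat) (hD : is_min_dist (hatC N a b) D) :
  let C' := map_code (piT pi) (hatC N a b) in
  [/\ is_LCD C',
      (exists B : 'M[F]_(s * N, (N + N) * n),
          \rank B = (s * N)%N /\ (forall v, C' v <-> exists x, v = x *m B))
    & exists Dstar, is_min_dist C' Dstar /\ (d * D <= Dstar)%N].
Proof.
move=> C'.
have h2K : 2%:R = 0 :> K := pcharf0 (@char2K _ K char2).
have hU := @U_nonzero _ a b N r m L iota theta h2K hb hr2 hm htheta hcond0 hcond1 hcond2.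
set G := row_mx 1%:M (hatT N a b).
split.
- move=> v [c [[u ->] ->]] H.
  suff -> : u = 0 by rewrite mul0mx piT0.
  apply: (hatC_LCD h2K hb hU) => w.
  apply: (tr_nondeg hpi) => l.
  have -> : l * dotF (u *m G) (w *m G) = dotF (u *m G) ((l *: w) *m G).
    by rewrite -scalemxAl [RHS]dotFC dotFZl dotFC.
  rewrite -(dotF_piT char2 hpi) H ?scale0r //.
  by exists ((l *: w) *m G); split => //; exists (l *: w).
- move: hs hn; rewrite -hK => _ _ {hK}.
  have [e [e' [be _ _]]] := hpi.
  pose uof (x : 'rV[F]_(\dim {:K} * N)) : 'rV[K]_N :=
    \row_i \sum_k x 0 (mxvec_index k i) *: e`_k.
  pose Phi x := piT pi (uof x *m G).
  have uofL k x y : uof (k *: x + y) = k%:A *: uof x + uof y.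
    apply/rowP => i; rewrite !mxE mulr_sumr -big_split; apply: eq_bigr => j _.
    by rewrite !mxE scalerDl -scalerA mulr_algl.
  have linPhi : linear Phi.
    move=> k x y; rewrite /Phi uofL mulmxDl -scalemxAl piT_lin //.
  pose flM := GRing.isLinear.Build _ _ _ _ Phi linPhi.
  pose PhiL : {linear 'rV[F]_(\dim {:K} * N) -> 'rV[F]_((N + N) * n)} :=
    HB.pack Phi flM.
  exists (lin1_mx PhiL); split.
    apply/eqP; rewrite -[_ == _]/(row_free _) -kermx_eq0.
    apply/rowV0P => x /sub_kermxP; rewrite mul_rV_lin1 /= /Phi.
    move/(piT_eq0 char2 hpi)/eqP; rewrite mul_mx_row row_mx_eq0 mulmx1.
    case/andP => /eqP ux _.
    apply/rowP => t; case/mxvec_indexP: t => k i; rewrite mxE.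
    have := congr1 (fun M : 'M[K]_(1, N) => M 0 i) ux; rewrite !mxE.
    by move/(freeP (basis_free be)) => ->.
  move=> v; split.
    case=> c [[u ->] ->].
    pose x : 'rV[F]_(\dim {:K} * N) := mxvec (\matrix_(k, i) coord e k (u 0 i)).
    exists x; rewrite mul_rV_lin1 /= /Phi; congr (piT pi (_ *m G)).
    apply/rowP => i; rewrite mxE (coord_basis be (memvf (u 0 i))).
    by apply: eq_bigr => k _; rewrite /x mxvecE mxE.
  case=> x ->; rewrite mul_rV_lin1 /=.
  by exists (uof x *m G); split => //; exists (uof x).
have wt_lb c : hatC N a b c -> c != 0 -> (d * D <= wt (piT pi c))%N.
  move=> hc c0; rewrite wt_piT.
  apply: (leq_trans (leq_mul (leqnn d) (hD.2 c hc c0))).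
  rewrite wtE big_distrr /=; apply: leq_sum => i _.
  case: (eqVneq (c ord0 i) 0) => [->|ci]; first by rewrite muln0.
  rewrite muln1; apply: hd.2; first by exists (c ord0 i).
  by apply/eqP => /(pi_inj char2 hpi); apply/eqP.
have ex0 : exists w, exists v, [/\ C' v, v != 0 & wt v = w].
  have N0 : (0 < N)%N by lia.
  pose u0 : 'rV[K]_N := delta_mx 0 (Ordinal N0).
  pose c0 := u0 *m G.
  have c00 : c0 != 0.
    apply/eqP => /(congr1 (fun M : 'M[K]_(1, N + N) => M 0 (lshift N (Ordinal N0)))).
    rewrite /c0 mul_mx_row row_mxEl mulmx1 !mxE !eqxx /= => /eqP.
    by rewrite oner_eq0.
  exists (wt (piT pi c0)), (piT pi c0); split => //.
    by exists c0; split => //; exists u0.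
  by apply/eqP => /(piT_eq0 char2 hpi) /eqP; apply/negP.
have [Dstar [[v [Cv v0 wv]] Dmin]] := min_exists ex0.
exists Dstar; split.
  split; first by exists v.
  by move=> c Cc c0; apply: Dmin; exists c.
case: Cv => c [hc vc]; rewrite -wv vc; apply: wt_lb => //.
by apply/eqP => c0; move: v0; rewrite vc c0 piT0 eqxx.
Qed.
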